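(* Let $\mathcal{U}$ be a finite alphabet, $p_{UX}$ a distribution on $\mathcal{U}\times\mathcal{X}$, and consider the random code ensemble described in the context, where for each $n$ the randomization index $K$ has an arbitrary (possibly non-uniform) distribution $p_{K}^{(n)}$ on $\{1,\dots,2^{nR_r}\}$. If $$\liminf_{n\to\infty}\tfrac1n R_2(K)>I(X;Z|U),$$ then there exists $\beta>0$ such that for all sufficiently large $n$, $$\mathbb{E}_{\mathcal{C}_n}\Big[\mathbb{V}\big(p_{MZ^n},\,p_M\,p_{Z^n}\big)\Big]\le 2^{-\beta n},$$ where the expectation is over the random codebook $\mathcal{C}_n$ and $p_{MZ^n}$ is the joint distribution of $(M,Z^n)$ induced by a given codebook.
   Context: All logarithms are base 2. $W_{YZ|X}$ is a discrete memoryless wiretap channel with finite alphabets, used memorylessly; the joint distribution of $(U,X,Y,Z)$ is $p_{UX}(u,x)W_{YZ|X}(y,z|x)$. Random code ensemble: fix rates $R_0,R,R_r>0$ and $n$. Generate $U^n(i)$, $i\in\{1,\dots,2^{nR_0}\}$, independently, each i.i.d. with law $p_U$; for each $i$, generate $X^n(i,j,k)$, $j\in\{1,\dots,2^{nR}\}$, $k\in\{1,\dots,2^{nR_r}\}$, conditionally independently with law $\prod_{t=1}^n p_{X|U}(\cdot|U_t(i))$. The indices $M_0$ and $M$ are independent and uniform on $\{1,\dots,2^{nR_0}\}$ and $\{1,\dots,2^{nR}\}$, and independent of a randomization index $K\in\{1,\dots,2^{nR_r}\}$; the transmitted word is $X^n(M_0,M,K)$ and $Z^n$ is the eavesdropper's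 output of $W^n$. The variational distance is $\mathbb{V}(p,q)=\sum_a|p(a)-q(a)|$. The Rényi entropy of order two of $K$ is $R_2(K)=-\log\sum_k p_K(k)^2$. *)

(* Defs.v *)
From HB Require Import structures.
From Stdlib Require Import ZArith Reals.
From mathcomp Require Import all_boot.

Set Implicit Arguments.
Unset Strict Implicit.
Unset Printing Implicit Defensive.

Local Open Scope R_scope.

Definition rsum (T : finType) (f : T -> R) : R := \big[Rplus/(IZR 0)]_(i : T) f i.
Definition rprod (T : finType) (f : T -> R) : R := \big[Rmult/(IZR 1)]_(i : T) f i.

Definition log2 (x : R) : R := ln x / ln 2.

(* Number of messages 2^{nR}, read as floor(2^{nR}) (>= 1 since R > 0). *)
Definition nbits (n : nat) (r : R) : nat :=
  Z.to_nat (Int_part (Rpower 2 (INR n * r))).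

Definition is_dist (T : finType) (p : T -> R) : Prop :=
  (forall t, 0 <= p t) /\ rsum p = 1.

(* Marginal p_U and conditional p_{X|U} (set to 0 where p_U(u) = 0). *)
Definition pU (U X : finType) (pUX : U -> X -> R) (u : U) : R :=
  rsum (fun x => pUX u x).
Definition pXgU (U X : finType) (pUX : U -> X -> R) (u : U) (x : X) : R :=
  if Req_EM_T (pU pUX u) 0 then 0 else pUX u x / pU pUX u.

Definition WZ (X Y Z : finType) (W : X -> Y -> Z -> R) (x : X) (z : Z) : R :=
  rsum (fun y => W x y z).

Definition pUXZ (U X Y Z : finType) (pUX : U -> X -> R) (W : X -> Y -> Z -> R)
  (u : U) (x : X) (z : Z) : R := pUX u x * WZ W x z.
Definition pUZ (U X Y Z : finType) (pUX : U -> X -> R) (W : X -> Y -> Z -> R)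
  (u : U) (z : Z) : R := rsum (fun x => pUXZ pUX W u x z).

(* Conditional mutual information I(X;Z|U) in bits (0 log 0 = 0). *)
Definition condMI (U X Y Z : finType) (pUX : U -> X -> R) (W : X -> Y -> Z -> R) : R :=
  rsum (fun u => rsum (fun x => rsum (fun z =>
    if Rlt_dec 0 (pUXZ pUX W u x z) then
      pUXZ pUX W u x z *
      log2 (pUXZ pUX W u x z * pU pUX u / (pUX u x * pUZ pUX W u z))
    else 0))).

Definition Renyi2 (T : finType) (p : T -> R) : R :=
  - log2 (rsum (fun k => p k * p k)).

Definition cb_prob (U X : finType) (pUX : U -> X -> R) (n N0 N Nr : nat)
  (ub : {ffun 'I_N0 -> {ffun 'I_n -> U}})
  (xb : {ffun 'I_N0 -> {ffun 'I_N -> {ffun 'I_Nr -> {ffun 'I_n -> X}}}}) : R :=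
  rprod (fun i => rprod (fun t => pU pUX (ub i t))) *
  rprod (fun i => rprod (fun j => rprod (fun k => rprod (fun t =>
     pXgU pUX (ub i t) (xb i j k t))))).

Definition pMZ (X Y Z : finType) (W : X -> Y -> Z -> R) (n N0 N Nr : nat)
  (pK : 'I_Nr -> R)
  (xb : {ffun 'I_N0 -> {ffun 'I_N -> {ffun 'I_Nr -> {ffun 'I_n -> X}}}})
  (m : 'I_N) (z : {ffun 'I_n -> Z}) : R :=
  rsum (fun m0 : 'I_N0 => rsum (fun k : 'I_Nr =>
    / INR N0 * / INR N * pK k * rprod (fun t => WZ W (xb m0 m k t) (z t)))).

Definition leak_V (X Y Z : finType) (W : X -> Y -> Z -> R) (n N0 N Nr : nat)
  (pK : 'I_Nr -> R)
  (xb : {ffun 'I_N0 -> {ffun 'I_N -> {ffun 'I_Nr -> {ffun 'I_n -> X}}}}) : R :=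
  let p := pMZ W pK xb in
  rsum (fun m : 'I_N => rsum (fun z : {ffun 'I_n -> Z} =>
    Rabs (p m z - rsum (fun z' => p m z') * rsum (fun m' => p m' z)))).

Definition expected_leak (U X Y Z : finType) (pUX : U -> X -> R)
  (W : X -> Y -> Z -> R) (n N0 N Nr : nat) (pK : 'I_Nr -> R) : R :=
  rsum (fun ub : {ffun 'I_N0 -> {ffun 'I_n -> U}} =>
  rsum (fun xb : {ffun 'I_N0 -> {ffun 'I_N -> {ffun 'I_Nr -> {ffun 'I_n -> X}}}} =>
    cb_prob pUX ub xb * leak_V W pK xb)).
Arguments expected_leak {U X Y Z} pUX W n N0 N Nr pK.

(* Main.v *)
Require Import Defs.
From HB Require Import structures.
From Stdlib Require Import ZArith Reals Lra Lia.
From mathcomp Require Import all_boot.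
Local Open Scope R_scope.

Lemma RplusA' : associative Rplus. Proof. move=> x y z; ring. Qed.
Lemma RmultA' : associative Rmult. Proof. move=> x y z; ring. Qed.
HB.instance Definition _ := Monoid.isComLaw.Build R 0 Rplus RplusA' Rplus_comm Rplus_0_l.
HB.instance Definition _ := Monoid.isComLaw.Build R 1 Rmult RmultA' Rmult_comm Rmult_1_l.
HB.instance Definition _ := Monoid.isMulLaw.Build R 0 Rmult Rmult_0_l Rmult_0_r.
HB.instance Definition _ := Monoid.isAddLaw.Build R Rmult Rplus Rmult_plus_distr_r Rmult_plus_distr_l.

Lemma sum_ffun_prod (I T : finType) (w : I -> T -> R) :
  rsum (fun f : {ffun I -> T} => rprod (fun i => w i (f i))) = rprod (fun i => rsum (w i)).
Proof. rewrite /rsum /rprod. by rewrite bigA_distr_bigA. Qed.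

Section Basic.
Variable T : finType.
Implicit Types f g : T -> R.

Lemma rsum_ext f g : (forall t, f t = g t) -> rsum f = rsum g.
Proof. move=> H; rewrite /rsum; apply: eq_bigr => t _; exact: H. Qed.

Lemma rprod_ext f g : (forall t, f t = g t) -> rprod f = rprod g.
Proof. move=> H; rewrite /rprod; apply: eq_bigr => t _; exact: H. Qed.

Lemma rsum_le f g : (forall t, f t <= g t) -> rsum f <= rsum g.
Proof.
move=> H; rewrite /rsum; elim/big_ind2: _ => [|x1 x2 y1 y2 *|t _]; [lra|lra|exact: H].
Qed.

Lemma rsum_ge0 f : (forall t, 0 <= f t) -> 0 <= rsum f.
Proof. move=> H; rewrite /rsum; elim/big_ind: _ => [|x y *|t _]; [lra|lra|exact: H]. Qed.

Lemma rprod_ge0 f : (forall t, 0 <= f t) -> 0 <= rprod f.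
Proof. move=> H; rewrite /rprod; elim/big_ind: _ => [|x y *|t _]; [lra|nra|exact: H]. Qed.

Lemma rprod_le1 f : (forall t, 0 <= f t <= 1) -> rprod f <= 1.
Proof.
move=> H; suff: 0 <= rprod f <= 1 by lra.
rewrite /rprod; elim/big_ind: _ => [|x y *|t _]; [lra|nra|exact: H].
Qed.

Lemma rsum_plus f g : rsum (fun t => f t + g t) = rsum f + rsum g.
Proof. by rewrite /rsum big_split. Qed.

Lemma rsum_opp f : rsum (fun t => - f t) = - rsum f.
Proof.
rewrite /rsum; elim/big_rec2: _ => //; first lra. move=> *; lra.
Qed.

Lemma rsum_minus f g : rsum (fun t => f t - g t) = rsum f - rsum g.
Proof. rewrite /Rminus rsum_plus rsum_opp //. Qed.

Lemma rsum_scal a f : rsum (fun t => a * f t) = a * rsum f.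
Proof. by rewrite /rsum big_distrr. Qed.

Lemma rsum_scalr a f : rsum (fun t => f t * a) = rsum f * a.
Proof. by rewrite /rsum big_distrl. Qed.

Lemma rsum_abs f : Rabs (rsum f) <= rsum (fun t => Rabs (f t)).
Proof.
rewrite /rsum; elim/big_rec2: _ => /=; first by rewrite Rabs_R0; lra.
move=> t x y _ H; apply: Rle_trans (Rabs_triang _ _) _; lra.
Qed.

Lemma rsum0 : rsum (fun _ : T => 0) = 0.
Proof. rewrite /rsum; elim/big_rec: _ => //; move=> *; lra. Qed.

Lemma rprod_mult f g : rprod (fun t => f t * g t) = rprod f * rprod g.
Proof. by rewrite /rprod big_split. Qed.

Lemma rprod1 : rprod (fun _ : T => 1) = 1.
Proof. rewrite /rprod; elim/big_rec: _ => //; move=> *; lra. Qed.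

Lemma rsum_D1 f t0 : rsum f = f t0 + rsum (fun t => if t == t0 then 0 else f t).
Proof.
rewrite /rsum (bigD1 t0) //=; congr (_ + _).
rewrite [RHS](bigD1 t0) //= eqxx Rplus_0_l; apply: eq_bigr => i /negbTE -> //.
Qed.

Lemma rprod_D1 f t0 : rprod f = f t0 * rprod (fun t => if t == t0 then 1 else f t).
Proof.
rewrite /rprod (bigD1 t0) //=; congr (_ * _).
rewrite [RHS](bigD1 t0) //= eqxx Rmult_1_l; apply: eq_bigr => i /negbTE -> //.
Qed.

Lemma rsum_term_le f t0 : (forall t, 0 <= f t) -> f t0 <= rsum f.
Proof.
move=> H; rewrite (rsum_D1 f t0).
have: 0 <= rsum (fun t => if t == t0 then 0 else f t).
  apply: rsum_ge0 => t; case: (t == t0) => //; lra.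
lra.
Qed.

Lemma rprod_neq0 f t0 : rprod f <> 0 -> f t0 <> 0.
Proof. rewrite (rprod_D1 f t0) => H E; apply: H; rewrite E; lra. Qed.

Lemma rsum_eq0 f t0 : (forall t, 0 <= f t) -> rsum f = 0 -> f t0 = 0.
Proof. move=> H E; have := rsum_term_le f t0 H; have := H t0; lra. Qed.

End Basic.
Arguments rsum_ext {T}.
Arguments rprod_ext {T}.
Arguments rsum_le {T}.
Arguments rsum_ge0 {T}.
Arguments rprod_ge0 {T}.
Arguments rprod_le1 {T}.
Arguments rsum_plus {T}.
Arguments rsum_opp {T}.
Arguments rsum_minus {T}.
Arguments rsum_scal {T}.
Arguments rsum_scalr {T}.
Arguments rsum_abs {T}.
Arguments rprod_mult {T}.
Arguments rsum_D1 {T}.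
Arguments rprod_D1 {T}.
Arguments rsum_term_le {T}.
Arguments rprod_neq0 {T}.
Arguments rsum_eq0 {T}.

Lemma rsum_swap (A B : finType) (f : A -> B -> R) :
  rsum (fun a => rsum (fun b => f a b)) = rsum (fun b => rsum (fun a => f a b)).
Proof. rewrite /rsum; exact: exchange_big. Qed.

Lemma rsum_const_ord N c : rsum (fun _ : 'I_N => c) = INR N * c.
Proof.
rewrite /rsum big_const_ord; elim: N => [|N IH] /=; first lra.
rewrite IH; case: N {IH} => [|N] /=; ring.
Qed.

Lemma rprod_const_ord n a : rprod (fun _ : 'I_n => a) = a ^ n.
Proof.
rewrite /rprod big_const_ord; elim: n => [|n IH] /=; first lra.
by rewrite IH.
Qed.

Section Prod.
Variables I T : finType.

Lemma sum_prod1 (w : I -> T -> R) i0 (g : T -> R) :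
  rsum (fun f : {ffun I -> T} => rprod (fun i => w i (f i)) * g (f i0)) =
  rsum (fun t => w i0 t * g t) * rprod (fun i => if i == i0 then 1 else rsum (w i)).
Proof.
pose w' := fun i t => if i == i0 then w i t * g t else w i t.
transitivity (rsum (fun f : {ffun I -> T} => rprod (fun i => w' i (f i)))).
  apply: rsum_ext => f; rewrite (rprod_D1 _ i0) [in RHS](rprod_D1 _ i0) /w' eqxx.
  have -> : rprod (fun t => if t == i0 then 1 else if t == i0 then w t (f t) * g (f t) else w t (f t))
     = rprod (fun t => if t == i0 then 1 else w t (f t)).
    by apply: rprod_ext => i; case: (i == i0).
  ring.
rewrite sum_ffun_prod (rprod_D1 _ i0) /w' eqxx; congr (_ * _).
by apply: rprod_ext => i; case: (i == i0).
Qed.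

Lemma sum_prod2 (w : I -> T -> R) k l (g1 g2 : T -> R) : k != l ->
  rsum (fun f : {ffun I -> T} => rprod (fun i => w i (f i)) * (g1 (f k) * g2 (f l))) =
  rsum (fun t => w k t * g1 t) * rsum (fun t => w l t * g2 t) *
  rprod (fun i => if (i == k) || (i == l) then 1 else rsum (w i)).
Proof.
move=> nkl.
pose w' := fun i t => if i == k then w i t * g1 t else if i == l then w i t * g2 t else w i t.
have lk : (l == k) = false by apply/negbTE; rewrite eq_sym.
transitivity (rsum (fun f : {ffun I -> T} => rprod (fun i => w' i (f i)))).
  apply: rsum_ext => f; rewrite (rprod_D1 _ k) [in RHS](rprod_D1 _ k) /w' eqxx.
  rewrite (rprod_D1 _ l) [X in _ = _ * X](rprod_D1 _ l) lk eqxx.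
  have -> : rprod (fun t => if t == l then 1 else if t == k then 1 else
      if t == k then w t (f t) * g1 (f t) else if t == l then w t (f t) * g2 (f t) else w t (f t))
     = rprod (fun t => if t == l then 1 else if t == k then 1 else w t (f t)).
    by apply: rprod_ext => i; case: (i == l); case: (i == k).
  ring.
rewrite sum_ffun_prod (rprod_D1 _ k) /w' eqxx (rprod_D1 _ l) lk eqxx.
rewrite -!Rmult_assoc; congr (_ * _).
by apply: rprod_ext => i; case: (i == l); case: (i == k).
Qed.

Lemma rprod_others1 (s : I -> R) (P : pred I) :
  (forall i, ~~ P i -> s i = 1) -> rprod (fun i => if P i then 1 else s i) = 1.
Proof.
move=> H; rewrite -[RHS](rprod1 I); apply: rprod_ext => i.
by case E: (P i) => //; rewrite H ?E.
Qed.

Lemma rprod_others_le1 (s : I -> R) (P : pred I) :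
  (forall i, ~~ P i -> 0 <= s i <= 1) -> rprod (fun i => if P i then 1 else s i) <= 1.
Proof.
move=> H; apply: rprod_le1 => i.
case E: (P i); first lra. by apply: H; rewrite E.
Qed.

Lemma rprod_others_ge0 (s : I -> R) (P : pred I) :
  (forall i, 0 <= s i) -> 0 <= rprod (fun i => if P i then 1 else s i).
Proof. move=> H; apply: rprod_ge0 => i; case: (P i) => //; lra. Qed.

Lemma sum_prod1_le (w : I -> T -> R) i0 (g : T -> R) :
  (forall i t, 0 <= w i t) -> (forall t, 0 <= g t) ->
  (forall i, i != i0 -> rsum (w i) <= 1) ->
  rsum (fun f : {ffun I -> T} => rprod (fun i => w i (f i)) * g (f i0)) <=
  rsum (fun t => w i0 t * g t).
Proof.
move=> w0 g0 w1; rewrite sum_prod1.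
have h1 : 0 <= rsum (fun t => w i0 t * g t) by apply: rsum_ge0 => t; have := w0 i0 t; have := g0 t; nra.
have h2 := @rprod_others_le1 (fun i => rsum (w i)) (pred1 i0).
have h3 := @rprod_others_ge0 (fun i => rsum (w i)) (pred1 i0).
have : rprod (fun i => if i == i0 then 1 else rsum (w i)) <= 1.
  apply: h2 => i Hi; split; [apply: rsum_ge0 => t; exact: w0| exact: w1].
have : 0 <= rprod (fun i => if i == i0 then 1 else rsum (w i)).
  apply: h3 => i; apply: rsum_ge0 => t; exact: w0.
nra.
Qed.

Lemma sum_prod1_eq (w : I -> T -> R) i0 (g : T -> R) :
  (forall i, rsum (w i) = 1) ->
  rsum (fun f : {ffun I -> T} => rprod (fun i => w i (f i)) * g (f i0)) =
  rsum (fun t => w i0 t * g t).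
Proof.
move=> w1; rewrite sum_prod1 (@rprod_others1 (fun i => rsum (w i))) ?Rmult_1_r //.
Qed.

Lemma sum_prod2_eq (w : I -> T -> R) k l (g1 g2 : T -> R) : k != l ->
  (forall i, rsum (w i) = 1) ->
  rsum (fun f : {ffun I -> T} => rprod (fun i => w i (f i)) * (g1 (f k) * g2 (f l))) =
  rsum (fun t => w k t * g1 t) * rsum (fun t => w l t * g2 t).
Proof.
move=> nkl w1; rewrite sum_prod2 // (@rprod_others1 (fun i => rsum (w i))) ?Rmult_1_r //.
Qed.

Lemma sum_prod0_eq (w : I -> T -> R) :
  (forall i, rsum (w i) = 1) ->
  rsum (fun f : {ffun I -> T} => rprod (fun i => w i (f i))) = 1.
Proof.
move=> w1; rewrite sum_ffun_prod -[RHS](rprod1 I); apply: rprod_ext => i; exact: w1.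
Qed.

End Prod.

Lemma jensen_abs (A : finType) (pi y : A -> R) :
  (forall a, 0 <= pi a) -> rsum pi = 1 ->
  rsum (fun a => pi a * Rabs (y a)) <= sqrt (rsum (fun a => pi a * (y a * y a))).
Proof.
move=> p0 p1; set m := rsum (fun a => pi a * Rabs (y a)).
have m0 : 0 <= m by apply: rsum_ge0 => a; have := p0 a; have := Rabs_pos (y a); nra.
have H : 0 <= rsum (fun a => pi a * ((Rabs (y a) - m) * (Rabs (y a) - m))).
  apply: rsum_ge0 => a; apply: Rmult_le_pos; [exact: p0| exact: Rle_0_sqr].
have E : rsum (fun a => pi a * ((Rabs (y a) - m) * (Rabs (y a) - m))) =
   rsum (fun a => pi a * (y a * y a)) - 2 * m * m + m * m * rsum pi.
  transitivity (rsum (fun a => pi a * (y a * y a) - 2 * m * (pi a * Rabs (y a)) + m * m * pi a)).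
    apply: rsum_ext => a.
    have: Rabs (y a) * Rabs (y a) = y a * y a by rewrite -Rabs_mult Rabs_pos_eq //; nra.
    move=> E; rewrite -E; ring.
  rewrite rsum_plus rsum_minus !rsum_scal -/m; ring.
rewrite E p1 in H.
rewrite -(sqrt_square m) //; apply: sqrt_le_1_alt; lra.
Qed.

Definition Qf (Xn Zn : finType) (mu : Xn -> R) (P : Xn -> Zn -> R) (z : Zn) : R :=
  rsum (fun x => mu x * P x z).
Arguments Qf {Xn Zn}.
Definition P1f (Xn Zn : finType) (mu : Xn -> R) (P : Xn -> Zn -> R) (c : R) x z : R :=
  if Rle_dec (P x z) (c * Qf mu P z) then P x z else 0.
Definition P2f (Xn Zn : finType) (mu : Xn -> R) (P : Xn -> Zn -> R) (c : R) x z : R :=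
  if Rle_dec (P x z) (c * Qf mu P z) then 0 else P x z.

Arguments P1f {Xn Zn}.
Arguments P2f {Xn Zn}.

Lemma sq_sum (A : finType) (a : A -> R) :
  rsum a * rsum a = rsum (fun k => rsum (fun l => a k * a l)).
Proof. rewrite -rsum_scalr; apply: rsum_ext => k; by rewrite rsum_scal. Qed.

Lemma sqrt_amgm a b : 0 <= a -> 0 <= b -> sqrt (a * b) <= (a + b) / 2.
Proof.
move=> a0 b0; rewrite -(sqrt_square ((a + b) / 2)); last lra.
apply: sqrt_le_1_alt.
have : 0 <= (a - b) * (a - b) by exact: Rle_0_sqr.
lra.
Qed.

Lemma variance_le (Xn : finType) (mu h : Xn -> R) :
  (forall x, 0 <= mu x) -> rsum mu = 1 ->
  rsum (fun x => mu x * ((h x - rsum (fun x' => mu x' * h x')) * (h x - rsum (fun x' => mu x' * h x'))))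
  <= rsum (fun x => mu x * (h x * h x)).
Proof.
move=> m0 m1; set m := rsum (fun x' => mu x' * h x').
transitivity (rsum (fun x => mu x * (h x * h x) - 2 * m * (mu x * h x) + m * m * mu x)).
  right; apply: rsum_ext => x; ring.
rewrite rsum_plus rsum_minus !rsum_scal -/m m1.
have : 0 <= m * m by exact: Rle_0_sqr.
lra.
Qed.

Lemma second_moment (Xn K : finType) (mu : Xn -> R) (pK : K -> R) (h : Xn -> R) :
  rsum mu = 1 -> rsum (fun x => mu x * h x) = 0 ->
  rsum (fun xs : {ffun K -> Xn} => rprod (fun k => mu (xs k)) *
     (rsum (fun k => pK k * h (xs k)) * rsum (fun k => pK k * h (xs k))))
  = rsum (fun k => pK k * pK k) * rsum (fun x => mu x * (h x * h x)).
Proof.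
move=> m1 mh.
transitivity (rsum (fun xs : {ffun K -> Xn} => rsum (fun k => rsum (fun l => pK k * pK l *
   (rprod (fun i => mu (xs i)) * (h (xs k) * h (xs l))))))).
  apply: rsum_ext => xs; rewrite sq_sum -rsum_scal; apply: rsum_ext => k.
  rewrite -rsum_scal; apply: rsum_ext => l; ring.
rewrite rsum_swap.
transitivity (rsum (fun k => rsum (fun l => pK k * pK l *
   rsum (fun xs : {ffun K -> Xn} => rprod (fun i => mu (xs i)) * (h (xs k) * h (xs l)))))).
  apply: rsum_ext => k; rewrite rsum_swap; apply: rsum_ext => l; by rewrite rsum_scal.
transitivity (rsum (fun k => rsum (fun l => pK k * pK l *
   (if l == k then rsum (fun x => mu x * (h x * h x)) else 0)))).
  apply: rsum_ext => k; apply: rsum_ext => l; congr (_ * _).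
  case: eqP => [->|/eqP nlk].
    rewrite (@sum_prod1_eq K Xn (fun _ => mu) k (fun x => h x * h x)) //.
  rewrite (@sum_prod2_eq K Xn (fun _ => mu) k l h h) //; first by rewrite mh; ring.
  by rewrite eq_sym.
rewrite -rsum_scalr; apply: rsum_ext => k.
rewrite (rsum_D1 _ k) eqxx.
set V := rsum (fun x => mu x * (h x * h x)).
have -> : rsum (fun t => if t == k then 0 else pK k * pK t * (if t == k then V else 0)) = 0.
  rewrite -[RHS](rsum0 K); apply: rsum_ext => l; case: (l == k) => //; ring.
ring.
Qed.

Lemma stepB (Xn Zn K : finType) (mu : Xn -> R) (P : Xn -> Zn -> R) (pK : K -> R) (c : R) :
  (forall x, 0 <= mu x) -> rsum mu = 1 -> (forall x z, 0 <= P x z) -> (forall x, rsum (P x) <= 1) ->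
  (forall k, 0 <= pK k) -> rsum pK = 1 -> 0 < c ->
  rsum (fun xs : {ffun K -> Xn} => rprod (fun k => mu (xs k)) *
     rsum (fun z => Rabs (rsum (fun k => pK k * P (xs k) z) - Qf mu P z)))
  <= sqrt (rsum (fun k => pK k * pK k) * c) +
     2 * rsum (fun z => rsum (fun x => mu x * P2f mu P c x z)).
Proof.
move=> m0 m1 P0 Pz1 pK0 pK1 c0.
set Q := Qf mu P.
set S := rsum (fun k => pK k * pK k).
set E1 := fun z => rsum (fun x => mu x * P1f mu P c x z).
set E2 := fun z => rsum (fun x => mu x * P2f mu P c x z).
have hsplit : forall x z, P x z = P1f mu P c x z + P2f mu P c x z.
  by move=> x z; rewrite /P1f /P2f; case: Rle_dec => ? /=; ring.
have P10 : forall x z, 0 <= P1f mu P c x z by move=> x z; rewrite /P1f; case: Rle_dec => ? /=; [exact: P0| lra].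
have P20 : forall x z, 0 <= P2f mu P c x z by move=> x z; rewrite /P2f; case: Rle_dec => ? /=; [lra| exact: P0].
have Q0 : forall z, 0 <= Q z by move=> z; apply: rsum_ge0 => x; apply: Rmult_le_pos.
have P1le : forall x z, P1f mu P c x z <= c * Q z.
  move=> x z; rewrite /P1f; case: Rle_dec => ? /=; first by [].
  have := Q0 z; nra.
have hQ : forall z, Q z = E1 z + E2 z.
  by move=> z; rewrite /Q /Qf /E1 /E2 -rsum_plus; apply: rsum_ext => x; rewrite hsplit; ring.
have E10 : forall z, 0 <= E1 z by move=> z; apply: rsum_ge0 => x; apply: Rmult_le_pos.
have E20 : forall z, 0 <= E2 z by move=> z; apply: rsum_ge0 => x; apply: Rmult_le_pos.
have SQ1 : rsum Q <= 1.
  rewrite /Q /Qf rsum_swap -m1; apply: rsum_le => x; rewrite rsum_scal.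
  have := Pz1 x; have := m0 x; nra.
have SE1 : rsum E1 <= 1.
  apply: Rle_trans SQ1; apply: rsum_le => z; rewrite hQ; have := E20 z; lra.
pose pi := fun xs : {ffun K -> Xn} => rprod (fun k => mu (xs k)).
have pi0 : forall xs, 0 <= pi xs by move=> xs; apply: rprod_ge0 => k.
have pi1 : rsum pi = 1 by apply: (@sum_prod0_eq K Xn (fun _ => mu)).
pose Y := fun (xs : {ffun K -> Xn}) z => rsum (fun k => pK k * (P1f mu P c (xs k) z - E1 z)).
pose B := fun (xs : {ffun K -> Xn}) => rsum (fun z => rsum (fun k => pK k * P2f mu P c (xs k) z)).
have pt : forall xs : {ffun K -> Xn}, rsum (fun z => Rabs (rsum (fun k => pK k * P (xs k) z) - Q z)) <=
    rsum (fun z => Rabs (Y xs z)) + B xs + rsum E2.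
  move=> xs; rewrite /B -!rsum_plus; apply: rsum_le => z.
  have e1 : Y xs z = rsum (fun k => pK k * P1f mu P c (xs k) z) - E1 z.
    transitivity (rsum (fun k => pK k * P1f mu P c (xs k) z) - rsum (fun k => pK k * E1 z)).
      by rewrite -rsum_minus; apply: rsum_ext => k; ring.
    by rewrite rsum_scalr pK1 Rmult_1_l.
  have e2 : rsum (fun k => pK k * P (xs k) z) = rsum (fun k => pK k * P1f mu P c (xs k) z) +
       rsum (fun k => pK k * P2f mu P c (xs k) z).
    rewrite -rsum_plus; apply: rsum_ext => k; rewrite hsplit; ring.
  have b0 : 0 <= rsum (fun k => pK k * P2f mu P c (xs k) z) by apply: rsum_ge0 => k; apply: Rmult_le_pos.
  have -> : rsum (fun k => pK k * P (xs k) z) - Q z = Y xs z +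
     (rsum (fun k => pK k * P2f mu P c (xs k) z) - E2 z) by rewrite e1 e2 hQ; ring.
  move: b0; set b := rsum (fun k => pK k * P2f mu P c (xs k) z) => b0.
  apply: Rle_trans (Rabs_triang _ _) _.
  have : Rabs (b - E2 z) <= b + E2 z by have := E20 z; split_Rabs; lra.
  lra.
have step1 : rsum (fun xs : {ffun K -> Xn} => rprod (fun k => mu (xs k)) *
     rsum (fun z => Rabs (rsum (fun k => pK k * P (xs k) z) - Qf mu P z))) <=
   rsum (fun xs => pi xs * rsum (fun z => Rabs (Y xs z))) + rsum (fun xs => pi xs * B xs) + rsum E2.
  apply: Rle_trans (_ : rsum (fun xs => pi xs * (rsum (fun z => Rabs (Y xs z)) + B xs + rsum E2)) <= _).
    apply: rsum_le => xs; apply: Rmult_le_compat_l; [exact: pi0| exact: pt].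
  have -> : rsum (fun xs => pi xs * (rsum (fun z => Rabs (Y xs z)) + B xs + rsum E2)) =
    rsum (fun xs => pi xs * rsum (fun z => Rabs (Y xs z))) + rsum (fun xs => pi xs * B xs) + rsum pi * rsum E2.
    by rewrite -rsum_scalr -!rsum_plus; apply: rsum_ext => xs; ring.
  rewrite pi1; lra.
have stepB_B : rsum (fun xs => pi xs * B xs) = rsum E2.
  transitivity (rsum (fun z => rsum (fun k => pK k * rsum (fun xs => pi xs * P2f mu P c (xs k) z)))).
    transitivity (rsum (fun xs => rsum (fun z => rsum (fun k => pK k * (pi xs * P2f mu P c (xs k) z))))).
      apply: rsum_ext => xs; rewrite /B -rsum_scal; apply: rsum_ext => z; rewrite -rsum_scal.
      apply: rsum_ext => k; ring.
    rewrite rsum_swap; apply: rsum_ext => z; rewrite rsum_swap; apply: rsum_ext => k.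
    by rewrite rsum_scal.
  apply: rsum_ext => z.
  transitivity (rsum (fun k => pK k * E2 z)); last by rewrite rsum_scalr pK1 Rmult_1_l.
  apply: rsum_ext => k; congr (_ * _).
  exact: (@sum_prod1_eq K Xn (fun _ => mu) k (fun x => P2f mu P c x z)).
have stepA : rsum (fun xs => pi xs * rsum (fun z => Rabs (Y xs z))) <= sqrt (S * c).
  transitivity (rsum (fun z => rsum (fun xs => pi xs * Rabs (Y xs z)))).
    right; rewrite rsum_swap; apply: rsum_ext => xs; by rewrite rsum_scal.
  apply: Rle_trans (_ : rsum (fun z => sqrt (S * c) * ((Q z + E1 z) / 2)) <= _); last first.
    rewrite rsum_scal; have sc0 := sqrt_pos (S * c).
    have : rsum (fun z => (Q z + E1 z) / 2) <= 1.
      rewrite (_ : rsum _ = (rsum Q + rsum E1) / 2); first lra.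
      rewrite /Rdiv -rsum_plus -rsum_scalr; apply: rsum_ext => z; ring.
    have : 0 <= rsum (fun z => (Q z + E1 z) / 2) by apply: rsum_ge0 => z; have := Q0 z; have := E10 z; lra.
    nra.
  apply: rsum_le => z.
  apply: Rle_trans (@jensen_abs _ pi (fun xs => Y xs z) pi0 pi1) _.
  pose h := fun x => P1f mu P c x z - E1 z.
  have mh : rsum (fun x => mu x * h x) = 0.
    rewrite /h (_ : rsum _ = E1 z - E1 z * rsum mu); first by rewrite m1; ring.
    rewrite -rsum_scal -rsum_minus; apply: rsum_ext => x; ring.
  have := @second_moment _ _ mu pK h m1 mh; rewrite /pi /Y -/S => ->.
  have hv := @variance_le _ mu (fun x => P1f mu P c x z) m0 m1.
  have hv2 : rsum (fun x => mu x * (P1f mu P c x z * P1f mu P c x z)) <= c * Q z * E1 z.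
    rewrite /E1 -rsum_scal; apply: rsum_le => x.
    have := P10 x z; have := P1le x z; have := m0 x.
    move=> a b d.
    have -> : mu x * (P1f mu P c x z * P1f mu P c x z) = (mu x * P1f mu P c x z) * P1f mu P c x z by ring.
    have -> : c * Q z * (mu x * P1f mu P c x z) = (mu x * P1f mu P c x z) * (c * Q z) by ring.
    by apply: Rmult_le_compat_l => //; apply: Rmult_le_pos.
  have S0 : 0 <= S by apply: rsum_ge0 => k; apply: Rmult_le_pos.
  have V0 : 0 <= rsum (fun x => mu x * (h x * h x)).
    apply: rsum_ge0 => x; apply: Rmult_le_pos => //; exact: Rle_0_sqr.
  apply: Rle_trans (_ : sqrt (S * c * (Q z * E1 z)) <= _).
    apply: sqrt_le_1_alt.
    have -> : S * c * (Q z * E1 z) = S * (c * Q z * E1 z) by ring.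
    apply: Rmult_le_compat_l => //. rewrite /h -/(E1 z) in hv *. lra.
  rewrite sqrt_mult; last first.
  - by apply: Rmult_le_pos; [exact: Q0| exact: E10].
  - apply: Rmult_le_pos => //; lra.
  apply: Rmult_le_compat_l; first exact: sqrt_pos.
  apply: sqrt_amgm; [exact: Q0| exact: E10].
rewrite -/Q. apply: Rle_trans step1 _. rewrite stepB_B. lra.
Qed.

Definition WU (U X Y Z : finType) (pUX : U -> X -> R) (W : X -> Y -> Z -> R) (u : U) (z : Z) : R :=
  rsum (fun x => pXgU pUX u x * WZ W x z).
Definition Pn (X Y Z : finType) (W : X -> Y -> Z -> R) (n : nat)
  (x : {ffun 'I_n -> X}) (z : {ffun 'I_n -> Z}) : R := rprod (fun t => WZ W (x t) (z t)).
Definition mun (U X : finType) (pUX : U -> X -> R) (n : nat)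
  (u : {ffun 'I_n -> U}) (x : {ffun 'I_n -> X}) : R := rprod (fun t => pXgU pUX (u t) (x t)).
Definition nun (U X : finType) (pUX : U -> X -> R) (n : nat) (u : {ffun 'I_n -> U}) : R :=
  rprod (fun t => pU pUX (u t)).
Arguments WU {U X Y Z}. Arguments Pn {X Y Z}. Arguments mun {U X}. Arguments nun {U X}.

Section Model.
Variables (U X Y Z : finType) (pUX : U -> X -> R) (W : X -> Y -> Z -> R).
Hypothesis pUX0 : forall u x, 0 <= pUX u x.
Hypothesis pUX1 : rsum (fun u => rsum (fun x => pUX u x)) = 1.
Hypothesis W0 : forall x y z, 0 <= W x y z.
Hypothesis W1 : forall x, rsum (fun y => rsum (fun z => W x y z)) = 1.

Lemma pU_ge0 u : 0 <= pU pUX u.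
Proof. by apply: rsum_ge0. Qed.

Lemma pXgU_ge0 u x : 0 <= pXgU pUX u x.
Proof.
rewrite /pXgU; case: Req_EM_T => ? /=; first lra.
have := pU_ge0 u; have := pUX0 u x => a b.
apply: Rmult_le_pos => //; apply: Rlt_le; apply: Rinv_0_lt_compat; lra.
Qed.

Lemma pXgU_sum u : pU pUX u <> 0 -> rsum (fun x => pXgU pUX u x) = 1.
Proof.
move=> H; rewrite /pXgU; case: Req_EM_T => ? /=; first by [].
rewrite /Rdiv rsum_scalr -/(pU pUX u); field; lra.
Qed.

Lemma pXgU_sum_le u : 0 <= rsum (fun x => pXgU pUX u x) <= 1.
Proof.
case: (Req_EM_T (pU pUX u) 0) => H.
  have -> : rsum (fun x => pXgU pUX u x) = 0.
    rewrite -[RHS](rsum0 X); apply: rsum_ext => x; rewrite /pXgU; case: Req_EM_T => //.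
  lra.
rewrite pXgU_sum //; lra.
Qed.

Lemma pU_pXgU u x : pU pUX u * pXgU pUX u x = pUX u x.
Proof.
rewrite /pXgU; case: Req_EM_T => H /=.
  rewrite Rmult_0_r; symmetry; apply: (rsum_eq0 (fun x => pUX u x)) => //.
field; exact: H.
Qed.

Lemma WZ_ge0 x z : 0 <= WZ W x z.
Proof. by apply: rsum_ge0. Qed.

Lemma WZ_sum x : rsum (fun z => WZ W x z) = 1.
Proof. by rewrite /WZ rsum_swap; apply: W1. Qed.

Lemma pU_sum : rsum (fun u => pU pUX u) = 1.
Proof. exact: pUX1. Qed.

Lemma Pn_ge0 n x z : 0 <= Pn W n x z.
Proof. apply: rprod_ge0 => t; exact: WZ_ge0. Qed.

Lemma Pn_sum n x : rsum (fun z => Pn W n x z) = 1.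
Proof.
rewrite /Pn (@sum_ffun_prod _ _ (fun t z => WZ W (x t) z)) -[RHS](rprod1 'I_n).
apply: rprod_ext => t; exact: WZ_sum.
Qed.

Lemma mun_ge0 n u x : 0 <= mun pUX n u x.
Proof. apply: rprod_ge0 => t; exact: pXgU_ge0. Qed.

Lemma nun_ge0 n u : 0 <= nun pUX n u.
Proof. apply: rprod_ge0 => t; exact: pU_ge0. Qed.

Lemma mun_sum_le n u : 0 <= rsum (mun pUX n u) <= 1.
Proof.
rewrite /mun (@sum_ffun_prod _ _ (fun t x => pXgU pUX (u t) x)); split.
  apply: rprod_ge0 => t; have := pXgU_sum_le (u t); lra.
apply: rprod_le1 => t; exact: pXgU_sum_le.
Qed.

Lemma mun_sum n u : nun pUX n u <> 0 -> rsum (mun pUX n u) = 1.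
Proof.
move=> H; rewrite /mun (@sum_ffun_prod _ _ (fun t x => pXgU pUX (u t) x)) -[RHS](rprod1 'I_n).
apply: rprod_ext => t; apply: pXgU_sum; exact: (rprod_neq0 _ t H).
Qed.

Lemma nun_sum n : rsum (nun pUX n) = 1.
Proof.
rewrite /nun (@sum_ffun_prod _ _ (fun t u => pU pUX u)) -[RHS](rprod1 'I_n).
apply: rprod_ext => t; exact: pU_sum.
Qed.


Lemma leak_generic (M Zt : finType) (p : M -> Zt -> R) (a : M -> R) (r : Zt -> R) :
  (forall m, 0 <= a m) -> rsum a = 1 -> (forall m, rsum (fun z => p m z) = a m) ->
  rsum (fun m => rsum (fun z => Rabs (p m z - rsum (fun z' => p m z') * rsum (fun m' => p m' z))))
  <= 2 * rsum (fun m => rsum (fun z => Rabs (p m z - a m * r z))).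
Proof.
move=> a0 a1 pa.
set T := rsum (fun m => rsum (fun z => Rabs (p m z - a m * r z))).
have h1 : rsum (fun m => rsum (fun z => Rabs (p m z - rsum (fun z' => p m z') * rsum (fun m' => p m' z))))
   <= T + rsum (fun m => rsum (fun z => a m * Rabs (r z - rsum (fun m' => p m' z)))).
  rewrite /T -rsum_plus; apply: rsum_le => m; rewrite -rsum_plus; apply: rsum_le => z.
  rewrite pa.
  have -> : p m z - a m * rsum (fun m' => p m' z) = (p m z - a m * r z) + a m * (r z - rsum (fun m' => p m' z)) by ring.
  apply: Rle_trans (Rabs_triang _ _) _; rewrite Rabs_mult (Rabs_pos_eq (a m)) //; lra.
have h2 : rsum (fun m => rsum (fun z => a m * Rabs (r z - rsum (fun m' => p m' z)))) <= T.
  rewrite [X in X <= _]rsum_swap /T [X in _ <= X]rsum_swap; apply: rsum_le => z.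
  set C := Rabs (r z - rsum (fun m' => p m' z)).
  rewrite (rsum_ext (fun m => a m * C) (fun m => C * a m)); last by move=> m; ring.
  rewrite rsum_scal a1 Rmult_1_r /C.
  have -> : r z - rsum (fun m' => p m' z) = - rsum (fun m => p m z - a m * r z).
    rewrite rsum_minus rsum_scalr a1; ring.
  rewrite Rabs_Ropp; exact: rsum_abs.
lra.
Qed.

Definition Dfun n Nr (pK : 'I_Nr -> R) (u : {ffun 'I_n -> U}) (xs : {ffun 'I_Nr -> {ffun 'I_n -> X}}) : R :=
  rsum (fun z => Rabs (rsum (fun k => pK k * Pn W n (xs k) z) - Qf (mun pUX n u) (Pn W n) z)).

Arguments Dfun {n Nr}.

Lemma Dfun_ge0 n Nr pK u xs : 0 <= @Dfun n Nr pK u xs.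
Proof. apply: rsum_ge0 => z; exact: Rabs_pos. Qed.

Lemma leak_bound n N0 N Nr (pK : 'I_Nr -> R) (ub : {ffun 'I_N0 -> {ffun 'I_n -> U}})
   (xb : {ffun 'I_N0 -> {ffun 'I_N -> {ffun 'I_Nr -> {ffun 'I_n -> X}}}}) :
  (0 < N0)%N -> (0 < N)%N -> rsum pK = 1 ->
  leak_V W pK xb <= 2 * rsum (fun m : 'I_N => rsum (fun m0 : 'I_N0 =>
      / INR N0 * / INR N * Dfun pK (ub m0) (xb m0 m))).
Proof.
move=> N00 N0' pK1.
have N0r : INR N0 <> 0 by apply: not_0_INR; apply/eqP; rewrite -lt0n.
have Nn : INR N <> 0 by apply: not_0_INR; apply/eqP; rewrite -lt0n.
have N0p : 0 < / INR N0 by apply: Rinv_0_lt_compat; have := pos_INR N0; lra.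
have Np : 0 < / INR N by apply: Rinv_0_lt_compat; have := pos_INR N; lra.
rewrite /leak_V /=.
set p := pMZ W pK xb.
pose r := fun z : {ffun 'I_n -> Z} => / INR N0 * rsum (fun m0 : 'I_N0 => Qf (mun pUX n (ub m0)) (Pn W n) z).
have pE : forall m z, p m z = rsum (fun m0 => / INR N0 * / INR N * rsum (fun k => pK k * Pn W n (xb m0 m k) z)).
  move=> m z; rewrite /p /pMZ; apply: rsum_ext => m0; rewrite -rsum_scal; apply: rsum_ext => k.
  rewrite /Pn; ring.
apply: Rle_trans (@leak_generic _ _ p (fun _ => / INR N) r _ _ _) _.
- move=> m; lra.
- by rewrite rsum_const_ord; field.
- move=> m; rewrite rsum_swap.
  transitivity (rsum (fun m0 : 'I_N0 => / INR N0 * / INR N)).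
    apply: rsum_ext => m0.
    transitivity (rsum (fun z => / INR N0 * / INR N * rsum (fun k => pK k * Pn W n (xb m0 m k) z))).
      apply: rsum_ext => z; rewrite /p /pMZ -rsum_scal; apply: rsum_ext => k; rewrite /Pn; ring.
    rewrite rsum_scal rsum_swap.
    rewrite (rsum_ext _ (fun k => pK k * 1)); first by rewrite rsum_scalr pK1; ring.
    move=> k; rewrite rsum_scal Pn_sum //.
  by rewrite rsum_const_ord; field.
apply: Rmult_le_compat_l; first lra.
apply: rsum_le => m.
apply: Rle_trans (_ : rsum (fun z => rsum (fun m0 : 'I_N0 => / INR N0 * / INR N *
   Rabs (rsum (fun k => pK k * Pn W n (xb m0 m k) z) - Qf (mun pUX n (ub m0)) (Pn W n) z))) <= _).
  apply: rsum_le => z.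
  have -> : p m z - / INR N * r z = rsum (fun m0 : 'I_N0 => / INR N0 * / INR N *
     (rsum (fun k => pK k * Pn W n (xb m0 m k) z) - Qf (mun pUX n (ub m0)) (Pn W n) z)).
    rewrite pE /r (_ : / INR N * (/ INR N0 * rsum (fun m0 : 'I_N0 => Qf (mun pUX n (ub m0)) (Pn W n) z))
       = rsum (fun m0 : 'I_N0 => / INR N0 * / INR N * Qf (mun pUX n (ub m0)) (Pn W n) z)); last first.
      by rewrite -!rsum_scal; apply: rsum_ext => m0; ring.
    rewrite -rsum_minus; apply: rsum_ext => m0; ring.
  apply: Rle_trans (rsum_abs _) _; apply: rsum_le => m0.
  rewrite Rabs_mult Rabs_pos_eq //; last by apply: Rmult_le_pos; lra.
  lra.
rewrite rsum_swap; apply: rsum_le => m0; rewrite /Dfun rsum_scal; lra.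
Qed.

Lemma sumK_le n Nr u : 0 <= rsum (fun xs : {ffun 'I_Nr -> {ffun 'I_n -> X}} =>
   rprod (fun k => mun pUX n u (xs k))) <= 1.
Proof.
rewrite (@sum_ffun_prod _ _ (fun k x => mun pUX n u x)); split.
  apply: rprod_ge0 => k; exact: (mun_sum_le n u).1.
apply: rprod_le1 => k; exact: mun_sum_le.
Qed.

Lemma sumH_le n N Nr u : 0 <= rsum (fun y : {ffun 'I_N -> {ffun 'I_Nr -> {ffun 'I_n -> X}}} =>
   rprod (fun j => rprod (fun k => mun pUX n u (y j k)))) <= 1.
Proof.
rewrite (@sum_ffun_prod _ _ (fun j (xs : {ffun 'I_Nr -> {ffun 'I_n -> X}}) => rprod (fun k => mun pUX n u (xs k)))); split.
  apply: rprod_ge0 => k; exact: (sumK_le n Nr u).1.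
apply: rprod_le1 => k; exact: sumK_le.
Qed.

Lemma swap4 (A B C D : finType) (f : A -> B -> C -> D -> R) :
  rsum (fun a => rsum (fun b => rsum (fun c => rsum (fun d => f a b c d)))) =
  rsum (fun c => rsum (fun d => rsum (fun a => rsum (fun b => f a b c d)))).
Proof.
transitivity (rsum (fun a => rsum (fun c => rsum (fun b => rsum (fun d => f a b c d))))).
  by apply: rsum_ext => a; rewrite rsum_swap.
rewrite rsum_swap; apply: rsum_ext => c.
transitivity (rsum (fun a => rsum (fun d => rsum (fun b => f a b c d)))).
  by apply: rsum_ext => a; rewrite rsum_swap.
rewrite rsum_swap; apply: rsum_ext => d; done.
Qed.

Definition Delta n Nr (pK : 'I_Nr -> R) : R :=
  rsum (fun u : {ffun 'I_n -> U} => nun pUX n u *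
    rsum (fun xs : {ffun 'I_Nr -> {ffun 'I_n -> X}} => rprod (fun k => mun pUX n u (xs k)) * Dfun pK u xs)).

Lemma cb_bound n N0 N Nr (pK : 'I_Nr -> R) (m0 : 'I_N0) (m : 'I_N) :
  rsum (fun ub : {ffun 'I_N0 -> {ffun 'I_n -> U}} =>
  rsum (fun xb : {ffun 'I_N0 -> {ffun 'I_N -> {ffun 'I_Nr -> {ffun 'I_n -> X}}}} =>
    cb_prob pUX ub xb * Dfun pK (ub m0) (xb m0 m))) <= Delta n Nr pK.
Proof.
pose E1 := fun u : {ffun 'I_n -> U} =>
    rsum (fun xs : {ffun 'I_Nr -> {ffun 'I_n -> X}} => rprod (fun k => mun pUX n u (xs k)) * Dfun pK u xs).
have E10 : forall u, 0 <= E1 u.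
  move=> u; apply: rsum_ge0 => xs; apply: Rmult_le_pos; last exact: Dfun_ge0.
  apply: rprod_ge0 => k; exact: mun_ge0.
apply: Rle_trans (_ : rsum (fun ub : {ffun 'I_N0 -> {ffun 'I_n -> U}} =>
    rprod (fun i => nun pUX n (ub i)) * E1 (ub m0)) <= _); last first.
  apply: (@sum_prod1_le _ _ (fun i u => nun pUX n u) m0 E1) => //.
  - move=> i u; exact: nun_ge0.
  - by move=> i _; rewrite nun_sum; lra.
apply: rsum_le => ub.
have -> : rsum (fun xb : {ffun 'I_N0 -> {ffun 'I_N -> {ffun 'I_Nr -> {ffun 'I_n -> X}}}} =>
    cb_prob pUX ub xb * Dfun pK (ub m0) (xb m0 m)) =
   rprod (fun i => nun pUX n (ub i)) *
   rsum (fun xb : {ffun 'I_N0 -> {ffun 'I_N -> {ffun 'I_Nr -> {ffun 'I_n -> X}}}} =>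
     rprod (fun i => rprod (fun j => rprod (fun k => mun pUX n (ub i) (xb i j k)))) *
     Dfun pK (ub m0) (xb m0 m)).
  rewrite -rsum_scal; apply: rsum_ext => xb; by rewrite -Rmult_assoc.
apply: Rmult_le_compat_l; first by apply: rprod_ge0 => i; exact: nun_ge0.
have H1 := @sum_prod1_le 'I_N0 _
   (fun i (y : {ffun 'I_N -> {ffun 'I_Nr -> {ffun 'I_n -> X}}}) => rprod (fun j => rprod (fun k => mun pUX n (ub i) (y j k)))) m0
   (fun y => Dfun pK (ub m0) (y m)).
apply: Rle_trans (H1 _ _ _) _.
- move=> i y; apply: rprod_ge0 => j; apply: rprod_ge0 => k; exact: mun_ge0.
- move=> y; exact: Dfun_ge0.
- move=> i _; exact: (sumH_le n N Nr (ub i)).2.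
have H2 := @sum_prod1_le 'I_N _
   (fun j (xs : {ffun 'I_Nr -> {ffun 'I_n -> X}}) => rprod (fun k => mun pUX n (ub m0) (xs k))) m
   (fun xs => Dfun pK (ub m0) xs).
apply: H2.
- move=> j xs; apply: rprod_ge0 => k; exact: mun_ge0.
- move=> xs; exact: Dfun_ge0.
- move=> j _; exact: (sumK_le n Nr (ub m0)).2.
Qed.

Lemma cb_prob_ge0 n N0 N Nr ub xb : 0 <= @cb_prob U X pUX n N0 N Nr ub xb.
Proof.
apply: Rmult_le_pos; apply: rprod_ge0 => i.
  exact: (nun_ge0 n (ub i)).
apply: rprod_ge0 => j; apply: rprod_ge0 => k; exact: mun_ge0.
Qed.

Lemma exp_leak_Delta n N0 N Nr (pK : 'I_Nr -> R) :
  (0 < N0)%N -> (0 < N)%N -> rsum pK = 1 ->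
  expected_leak pUX W n N0 N Nr pK <= 2 * Delta n Nr pK.
Proof.
move=> N00 N0' pK1.
have N0r : INR N0 <> 0 by apply: not_0_INR; apply/eqP; rewrite -lt0n.
have Nn : INR N <> 0 by apply: not_0_INR; apply/eqP; rewrite -lt0n.
have N0p : 0 < / INR N0 by apply: Rinv_0_lt_compat; have := pos_INR N0; lra.
have Np : 0 < / INR N by apply: Rinv_0_lt_compat; have := pos_INR N; lra.
rewrite /expected_leak.
apply: Rle_trans (_ : rsum (fun ub : {ffun 'I_N0 -> {ffun 'I_n -> U}} =>
  rsum (fun xb : {ffun 'I_N0 -> {ffun 'I_N -> {ffun 'I_Nr -> {ffun 'I_n -> X}}}} =>
    cb_prob pUX ub xb * (2 * rsum (fun m : 'I_N => rsum (fun m0 : 'I_N0 =>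
      / INR N0 * / INR N * Dfun pK (ub m0) (xb m0 m)))))) <= _).
  apply: rsum_le => ub; apply: rsum_le => xb; apply: Rmult_le_compat_l.
    exact: cb_prob_ge0.
  exact: leak_bound.
rewrite (rsum_ext _ (fun ub : {ffun 'I_N0 -> {ffun 'I_n -> U}} =>
  rsum (fun xb : {ffun 'I_N0 -> {ffun 'I_N -> {ffun 'I_Nr -> {ffun 'I_n -> X}}}} =>
    rsum (fun m : 'I_N => rsum (fun m0 : 'I_N0 =>
      2 * (/ INR N0 * / INR N) * (cb_prob pUX ub xb * Dfun pK (ub m0) (xb m0 m))))))); last first.
  move=> ub; apply: rsum_ext => xb; rewrite -rsum_scal -rsum_scal.
  apply: rsum_ext => m; rewrite -rsum_scal -rsum_scal; apply: rsum_ext => m0; ring.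
rewrite swap4.
apply: Rle_trans (_ : rsum (fun m : 'I_N => rsum (fun m0 : 'I_N0 =>
      2 * (/ INR N0 * / INR N) * Delta n Nr pK)) <= _).
  apply: rsum_le => m; apply: rsum_le => m0.
  rewrite (rsum_ext _ (fun ub => 2 * (/ INR N0 * / INR N) * rsum (fun xb => cb_prob pUX ub xb * Dfun pK (ub m0) (xb m0 m)))); last first.
    by move=> ub; rewrite rsum_scal.
  rewrite rsum_scal; apply: Rmult_le_compat_l; first by apply: Rmult_le_pos; [lra| apply: Rmult_le_pos; lra].
  exact: cb_bound.
right; rewrite rsum_const_ord rsum_const_ord; field; split => //.
Qed.

Definition tail n (c : R) : R :=
  rsum (fun u : {ffun 'I_n -> U} => nun pUX n u *
    rsum (fun z => rsum (fun x => mun pUX n u x * P2f (mun pUX n u) (Pn W n) c x z))).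

Lemma Delta_bound n Nr (pK : 'I_Nr -> R) c :
  (forall k, 0 <= pK k) -> rsum pK = 1 -> 0 < c ->
  Delta n Nr pK <= sqrt (rsum (fun k => pK k * pK k) * c) + 2 * tail n c.
Proof.
move=> pK0 pK1 c0.
set s := sqrt (rsum (fun k => pK k * pK k) * c).
rewrite /Delta /tail.
apply: Rle_trans (_ : rsum (fun u : {ffun 'I_n -> U} => nun pUX n u * (s +
   2 * rsum (fun z => rsum (fun x => mun pUX n u x * P2f (mun pUX n u) (Pn W n) c x z)))) <= _).
  apply: rsum_le => u.
  case: (Req_EM_T (nun pUX n u) 0) => H; first by rewrite H !Rmult_0_l; lra.
  apply: Rmult_le_compat_l; first exact: nun_ge0.
  apply: stepB => //.
  - move=> x; exact: mun_ge0.
  - exact: mun_sum.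
  - move=> x z; exact: Pn_ge0.
  - move=> x; rewrite Pn_sum; lra.
right; rewrite (rsum_ext _ (fun u => s * nun pUX n u + 2 * (nun pUX n u *
   rsum (fun z => rsum (fun x => mun pUX n u x * P2f (mun pUX n u) (Pn W n) c x z))))); last first.
  move=> u; ring.
rewrite rsum_plus rsum_scal rsum_scal nun_sum Rmult_1_r; reflexivity.
Qed.

Lemma rprod_Rpower (T : finType) (f : T -> R) a :
  (forall t, 0 < f t) -> rprod (fun t => Rpower (f t) a) = Rpower (rprod f) a.
Proof.
move=> H; rewrite /rprod.
suff: 0 < \big[Rmult/1]_(t : T) f t /\
   \big[Rmult/1]_(t : T) Rpower (f t) a = Rpower (\big[Rmult/1]_(t : T) f t) a by case.
elim/big_rec2: _ => [|t y1 y2 _ [h1 h2]].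
  by split; [lra| rewrite /Rpower ln_1 Rmult_0_r exp_0].
split; first by apply: Rmult_lt_0_compat.
by rewrite h2 Rpower_mult_distr.
Qed.

Lemma rprod_inv (T : finType) (f : T -> R) : rprod (fun t => / f t) = / rprod f.
Proof.
rewrite /rprod; elim/big_rec2: _ => [|t y1 y2 _ ->]; first by rewrite Rinv_1.
by rewrite Rinv_mult.
Qed.

Lemma rprod_gt0 (T : finType) (f : T -> R) : (forall t, 0 < f t) -> 0 < rprod f.
Proof.
move=> H; rewrite /rprod; elim/big_ind: _ => [|x y *|t _]; [lra| exact: Rmult_lt_0_compat| exact: H].
Qed.

Lemma Rpower_gt0 x a : 0 < Rpower x a.
Proof. exact: exp_pos. Qed.

Lemma Rpower_le_base x y a : 0 < x -> x <= y -> 0 <= a -> Rpower x a <= Rpower y a.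
Proof.
move=> x0 xy a0; rewrite /Rpower.
case: (Rle_lt_or_eq_dec _ _ xy) => [lt|<-]; last lra.
have := ln_increasing x y x0 lt => hl.
case: (Rle_lt_or_eq_dec _ _ a0) => [ap|<-]; last by rewrite !Rmult_0_l; lra.
left; apply: exp_increasing; nra.
Qed.

Lemma Qf_prod n u z : Qf (mun pUX n u) (Pn W n) z = rprod (fun t => WU pUX W (u t) (z t)).
Proof.
rewrite /Qf /WU -(@sum_ffun_prod _ _ (fun t x' => pXgU pUX (u t) x' * WZ W x' (z t))).
apply: rsum_ext => x; rewrite /mun /Pn -rprod_mult //.
Qed.

Definition rho (u : U) (x : X) (z : Z) : R := WZ W x z / WU pUX W u z.

Definition gfun (lam : R) : R :=
  rsum (fun u => rsum (fun x => rsum (fun z => pUXZ pUX W u x z * Rpower (rho u x z) lam))).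

Lemma pUXZ_ge0 u x z : 0 <= pUXZ pUX W u x z.
Proof. apply: Rmult_le_pos; [exact: pUX0| exact: WZ_ge0]. Qed.

Lemma pos_facts u x z : 0 < pUXZ pUX W u x z ->
  0 < pU pUX u /\ 0 < pXgU pUX u x /\ 0 < WZ W x z /\ 0 < WU pUX W u z.
Proof.
move=> q0.
have hx : 0 < pUX u x /\ 0 < WZ W x z.
  move: q0; rewrite /pUXZ; have := pUX0 u x; have := WZ_ge0 x z => a b c.
  split; apply: Rnot_le_lt => h; have : pUX u x * WZ W x z <= 0; try lra.
  - have -> : pUX u x = 0 by lra. lra.
  - have -> : WZ W x z = 0 by lra. lra.
case: hx => hx hw.
have hu : 0 < pU pUX u.
  apply: Rlt_le_trans hx _; exact: (rsum_term_le (fun x => pUX u x) x (pUX0 u)).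
have hg : 0 < pXgU pUX u x.
  rewrite /pXgU; case: Req_EM_T => ? /=; first lra.
  apply: Rdiv_lt_0_compat => //.
split => //; split => //; split => //.
apply: Rlt_le_trans (_ : pXgU pUX u x * WZ W x z <= _).
  exact: Rmult_lt_0_compat.
apply: (rsum_term_le (fun x' => pXgU pUX u x' * WZ W x' z) x).
move=> x'; apply: Rmult_le_pos; [exact: pXgU_ge0| exact: WZ_ge0].
Qed.

Definition Fq (lam : R) (u : U) (x : X) (z : Z) : R := pUXZ pUX W u x z * Rpower (rho u x z) lam.

Lemma Fq_ge0 lam u x z : 0 <= Fq lam u x z.
Proof. apply: Rmult_le_pos; [exact: pUXZ_ge0| left; exact: Rpower_gt0]. Qed.

Lemma tail_pt n c lam (u : {ffun 'I_n -> U}) x z : 0 < c -> 0 <= lam ->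
  nun pUX n u * (mun pUX n u x * P2f (mun pUX n u) (Pn W n) c x z) <=
  rprod (fun t => Fq lam (u t) (x t) (z t)) * / Rpower c lam.
Proof.
move=> c0 l0.
have ic0 : 0 < / Rpower c lam by apply: Rinv_0_lt_compat; exact: Rpower_gt0.
have R0 : 0 <= rprod (fun t => Fq lam (u t) (x t) (z t)) * / Rpower c lam.
  apply: Rmult_le_pos; [apply: rprod_ge0 => t; exact: Fq_ge0| lra].
have e : nun pUX n u * (mun pUX n u x * Pn W n x z) = rprod (fun t => pUXZ pUX W (u t) (x t) (z t)).
  rewrite /nun /mun /Pn -!rprod_mult; apply: rprod_ext => t.
  by rewrite -Rmult_assoc pU_pXgU.
rewrite /P2f; case: Rle_dec => h /=; first by rewrite Rmult_0_r Rmult_0_r.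
rewrite e.
have qge : forall t, 0 <= pUXZ pUX W (u t) (x t) (z t) by move=> t; exact: pUXZ_ge0.
case: (Req_EM_T (rprod (fun t => pUXZ pUX W (u t) (x t) (z t))) 0) => hq; first by rewrite hq.
have qp : forall t, 0 < pUXZ pUX W (u t) (x t) (z t).
  move=> t; have := rprod_neq0 _ t hq; have := qge t; lra.
have WUp : forall t, 0 < WU pUX W (u t) (z t) by move=> t; have [_ [_ [_ ?]]] := @pos_facts _ _ _ (qp t).
have WZp : forall t, 0 < WZ W (x t) (z t) by move=> t; have [_ [_ [? _]]] := @pos_facts _ _ _ (qp t).
have Qp : 0 < Qf (mun pUX n u) (Pn W n) z by rewrite Qf_prod; apply: rprod_gt0.
have Pp : 0 < Pn W n x z by apply: rprod_gt0.
have rhoE : rprod (fun t => rho (u t) (x t) (z t)) = Pn W n x z / Qf (mun pUX n u) (Pn W n) z.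
  rewrite Qf_prod /rho /Rdiv rprod_mult rprod_inv //.
have rhop : forall t, 0 < rho (u t) (x t) (z t) by move=> t; apply: Rdiv_lt_0_compat.
have key : Rpower c lam <= rprod (fun t => Rpower (rho (u t) (x t) (z t)) lam).
  rewrite rprod_Rpower // rhoE; apply: Rpower_le_base => //.
  apply: Rlt_le; apply: (Rmult_lt_reg_r (Qf (mun pUX n u) (Pn W n) z)) => //.
  rewrite /Rdiv Rmult_assoc Rinv_l ?Rmult_1_r; lra.
rewrite (rprod_mult (fun t => pUXZ pUX W (u t) (x t) (z t)) (fun t => Rpower (rho (u t) (x t) (z t)) lam)).
have A0 : 0 <= rprod (fun t => pUXZ pUX W (u t) (x t) (z t)) by apply: rprod_ge0.
have cp := Rpower_gt0 c lam.
have h1 : 1 <= rprod (fun t => Rpower (rho (u t) (x t) (z t)) lam) * / Rpower c lam.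
  apply: (Rmult_le_reg_r (Rpower c lam)) => //.
  rewrite Rmult_assoc Rinv_l; last by apply: Rgt_not_eq; exact: cp.
  rewrite Rmult_1_r Rmult_1_l; exact: key.
rewrite Rmult_assoc; have := Rmult_le_compat_l _ _ _ A0 h1; rewrite Rmult_1_r; exact.
Qed.

Lemma tail_bound n c lam : 0 < c -> 0 <= lam ->
  tail n c <= gfun lam ^ n * / Rpower c lam.
Proof.
move=> c0 l0.
rewrite /tail.
apply: Rle_trans (_ : rsum (fun u : {ffun 'I_n -> U} => rsum (fun x : {ffun 'I_n -> X} =>
   rsum (fun z : {ffun 'I_n -> Z} => rprod (fun t => Fq lam (u t) (x t) (z t)) * / Rpower c lam))) <= _).
  apply: rsum_le => u; rewrite -rsum_scal rsum_swap; apply: rsum_le => x.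
  rewrite -rsum_scal; apply: rsum_le => z; exact: tail_pt.
right.
transitivity (rsum (fun u : {ffun 'I_n -> U} => rsum (fun x : {ffun 'I_n -> X} =>
   rsum (fun z : {ffun 'I_n -> Z} => rprod (fun t => Fq lam (u t) (x t) (z t))))) * / Rpower c lam).
  rewrite -rsum_scalr; apply: rsum_ext => u; rewrite -rsum_scalr; apply: rsum_ext => x.
  by rewrite -rsum_scalr.
congr (_ * _).
transitivity (rsum (fun u : {ffun 'I_n -> U} => rsum (fun x : {ffun 'I_n -> X} =>
   rprod (fun t => rsum (fun z' => Fq lam (u t) (x t) z'))))).
  apply: rsum_ext => u; apply: rsum_ext => x.
  exact: (@sum_ffun_prod _ _ (fun t z' => Fq lam (u t) (x t) z')).
transitivity (rsum (fun u : {ffun 'I_n -> U} =>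
   rprod (fun t => rsum (fun x' => rsum (fun z' => Fq lam (u t) x' z'))))).
  apply: rsum_ext => u.
  exact: (@sum_ffun_prod _ _ (fun t x' => rsum (fun z' => Fq lam (u t) x' z'))).
rewrite (@sum_ffun_prod _ _ (fun t u' => rsum (fun x' => rsum (fun z' => Fq lam u' x' z')))).
by rewrite rprod_const_ord.
Qed.

Lemma exp_quad y : y <= 1/2 -> exp y <= 1 + y + 2 * (y * y).
Proof.
move=> hy.
have h1 := exp_ineq1_le (- y).
have hp : 0 < 1 - y by lra.
have e : exp y = / exp (- y) by rewrite exp_Ropp Rinv_inv.
rewrite e.
apply: Rle_trans (_ : / (1 - y) <= _).
  apply: Rinv_le_contravar => //; lra.
apply: (Rmult_le_reg_l (1 - y)) => //.
rewrite Rinv_r; last lra.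
have : 0 <= y * y * (1 - 2 * y) by apply: Rmult_le_pos; [exact: Rle_0_sqr| lra].
nra.
Qed.

Definition Lf (u : U) (x : X) (z : Z) : R :=
  if Rlt_dec 0 (pUXZ pUX W u x z) then ln (rho u x z) else 0.

Definition Bc : R := 1 + rsum (fun u => rsum (fun x => rsum (fun z => Rabs (Lf u x z)))).

Lemma Lf_le u x z : Rabs (Lf u x z) <= Bc - 1.
Proof.
rewrite /Bc.
have H1 : forall u x z, 0 <= Rabs (Lf u x z) by move=> *; exact: Rabs_pos.
apply: Rle_trans (_ : rsum (fun z => Rabs (Lf u x z)) <= _); first exact: rsum_term_le.
apply: Rle_trans (_ : rsum (fun x => rsum (fun z => Rabs (Lf u x z))) <= _).
  apply: (rsum_term_le (fun x => rsum (fun z => Rabs (Lf u x z))) x) => x'; exact: rsum_ge0.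
have := (rsum_term_le (fun u => rsum (fun x => rsum (fun z => Rabs (Lf u x z)))) u).
move=> h; have := h (fun u' => rsum_ge0 _ (fun x' => rsum_ge0 _ (fun z' => H1 u' x' z'))); lra.
Qed.

Lemma q_sum : rsum (fun u => rsum (fun x => rsum (fun z => pUXZ pUX W u x z))) = 1.
Proof.
rewrite -pUX1; apply: rsum_ext => u; apply: rsum_ext => x.
by rewrite /pUXZ rsum_scal WZ_sum Rmult_1_r.
Qed.

Lemma pUZ_eq u z : pUZ pUX W u z = pU pUX u * WU pUX W u z.
Proof.
rewrite /pUZ /WU -rsum_scal; apply: rsum_ext => x.
by rewrite /pUXZ -Rmult_assoc pU_pXgU.
Qed.

Lemma condMI_eq : condMI pUX W * ln 2 =
  rsum (fun u => rsum (fun x => rsum (fun z => pUXZ pUX W u x z * Lf u x z))).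
Proof.
have l2 : 0 < ln 2 by rewrite -ln_1; apply: ln_increasing; lra.
rewrite /condMI -rsum_scalr; apply: rsum_ext => u; rewrite -rsum_scalr; apply: rsum_ext => x.
rewrite -rsum_scalr; apply: rsum_ext => z.
rewrite /Lf; case: Rlt_dec => h /=; last ring.
have [hu [hg [hw hwu]]] := @pos_facts _ _ _ h.
have hx : 0 < pUX u x by rewrite -(pU_pXgU u x); apply: Rmult_lt_0_compat.
have -> : pUXZ pUX W u x z * pU pUX u / (pUX u x * pUZ pUX W u z) = rho u x z.
  rewrite pUZ_eq /pUXZ /rho; field; repeat split; lra.
rewrite /log2; field; lra.
Qed.

Lemma gfun_bound lam : 0 < lam -> lam * Bc <= 1/2 ->
  gfun lam <= exp (lam * ln 2 * condMI pUX W + 2 * (lam * lam) * (Bc * Bc)).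
Proof.
move=> l0 lB.
have B1 : 1 <= Bc.
  rewrite /Bc; have : 0 <= rsum (fun u => rsum (fun x => rsum (fun z => Rabs (Lf u x z)))).
    apply: rsum_ge0 => u; apply: rsum_ge0 => x; apply: rsum_ge0 => z; exact: Rabs_pos.
  lra.
apply: Rle_trans (_ : 1 + (lam * ln 2 * condMI pUX W + 2 * (lam * lam) * (Bc * Bc)) <= _); last first.
  exact: exp_ineq1_le.
apply: Rle_trans (_ : rsum (fun u => rsum (fun x => rsum (fun z =>
   pUXZ pUX W u x z * (1 + lam * Lf u x z + 2 * (lam * lam) * (Bc * Bc))))) <= _).
  apply: rsum_le => u; apply: rsum_le => x; apply: rsum_le => z.
  have q0 := pUXZ_ge0 u x z.
  case: (Rle_lt_or_eq_dec _ _ q0) => hq; last first.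
    by rewrite -hq !Rmult_0_l; lra.
  apply: Rmult_le_compat_l => //.
  have hL := Lf_le u x z.
  have [_ [_ [hw hwu]]] := @pos_facts _ _ _ hq.
  have rp : 0 < rho u x z by apply: Rdiv_lt_0_compat.
  have -> : Rpower (rho u x z) lam = exp (lam * Lf u x z).
    by rewrite /Rpower /Lf; case: Rlt_dec => //= ?.
  have hy : lam * Lf u x z <= 1 / 2.
    have : Lf u x z <= Bc by move: hL; split_Rabs; lra.
    nra.
  have hq1 := @exp_quad _ hy.
  have : Lf u x z * Lf u x z <= Bc * Bc.
    have : Rabs (Lf u x z) * Rabs (Lf u x z) <= Bc * Bc.
      apply: Rmult_le_compat; try exact: Rabs_pos; lra.
    by rewrite -Rabs_mult Rabs_pos_eq //; exact: Rle_0_sqr.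
  move=> h2.
  have h3 : lam * lam * (Lf u x z * Lf u x z) <= lam * lam * (Bc * Bc).
    apply: Rmult_le_compat_l => //; apply: Rmult_le_pos; lra.
  have e : lam * Lf u x z * (lam * Lf u x z) = lam * lam * (Lf u x z * Lf u x z) by ring.
  rewrite e in hq1; lra.
right.
transitivity (rsum (fun u => rsum (fun x => rsum (fun z => pUXZ pUX W u x z))) +
   lam * rsum (fun u => rsum (fun x => rsum (fun z => pUXZ pUX W u x z * Lf u x z))) +
   2 * (lam * lam) * (Bc * Bc) * rsum (fun u => rsum (fun x => rsum (fun z => pUXZ pUX W u x z)))).
  rewrite -!rsum_scal -!rsum_plus; apply: rsum_ext => u.
  rewrite -!rsum_scal -!rsum_plus; apply: rsum_ext => x.
  rewrite -!rsum_scal -!rsum_plus; apply: rsum_ext => z; ring.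
rewrite q_sum -condMI_eq; ring.
Qed.

Lemma gfun_ge0 lam : 0 <= gfun lam.
Proof.
apply: rsum_ge0 => u; apply: rsum_ge0 => x; apply: rsum_ge0 => z.
apply: Rmult_le_pos; [exact: pUXZ_ge0| left; exact: Rpower_gt0].
Qed.

Lemma main_bound n N0 N Nr (pK : 'I_Nr -> R) (gam lam : R) :
  (0 < N0)%N -> (0 < N)%N -> (forall k, 0 <= pK k) -> rsum pK = 1 ->
  0 < lam -> lam * Bc <= 1/2 ->
  expected_leak pUX W n N0 N Nr pK <=
  2 * sqrt (rsum (fun k => pK k * pK k) * Rpower 2 gam) +
  4 * (exp (lam * ln 2 * condMI pUX W + 2 * (lam * lam) * (Bc * Bc)) ^ n * / Rpower (Rpower 2 gam) lam).
Proof.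
move=> N00 N0' pK0 pK1 l0 lB.
have c0 : 0 < Rpower 2 gam by exact: Rpower_gt0.
apply: Rle_trans (@exp_leak_Delta n N0 N Nr pK N00 N0' pK1) _.
have hD := @Delta_bound n Nr pK _ pK0 pK1 c0.
have hT := @tail_bound n _ lam c0 (Rlt_le _ _ l0).
have hg := @gfun_bound lam l0 lB.
have hp : gfun lam ^ n <= exp (lam * ln 2 * condMI pUX W + 2 * (lam * lam) * (Bc * Bc)) ^ n.
  apply: pow_incr; split => //; exact: gfun_ge0.
have ic : 0 < / Rpower (Rpower 2 gam) lam by apply: Rinv_0_lt_compat; exact: Rpower_gt0.
have : gfun lam ^ n * / Rpower (Rpower 2 gam) lam <=
   exp (lam * ln 2 * condMI pUX W + 2 * (lam * lam) * (Bc * Bc)) ^ n * / Rpower (Rpower 2 gam) lam.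
  apply: Rmult_le_compat_r => //; lra.
lra.
Qed.

End Model.

Lemma exp_le a b : a <= b -> exp a <= exp b.
Proof. move=> h; case: (Rle_lt_or_eq_dec _ _ h) => [lt|->]; [left; exact: exp_increasing| lra]. Qed.

Lemma exp_pow a n : exp a ^ n = exp (INR n * a).
Proof.
elim: n => [|n IH]; first by rewrite /= Rmult_0_l exp_0.
rewrite -tech_pow_Rmult IH -exp_plus S_INR; congr exp; ring.
Qed.

Lemma nbits_pos n r : 0 < r -> (0 < nbits n r)%N.
Proof.
move=> r0; rewrite /nbits.
have h1 : 1 <= Rpower 2 (INR n * r).
  rewrite /Rpower; apply: Rle_trans (exp_ineq1_le _).
  have l2 : 0 < ln 2 by rewrite -ln_1; apply: ln_increasing; lra.
  have := pos_INR n => hn.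
  have : 0 <= INR n * r * ln 2 by apply: Rmult_le_pos; [apply: Rmult_le_pos; lra| lra].
  lra.
have [_ h2] := base_Int_part (Rpower 2 (INR n * r)).
have h3 : (0 < Int_part (Rpower 2 (INR n * r)))%Z by apply: lt_IZR; lra.
apply/ltP; lia.
Qed.

Lemma Bc_ge1 (U X Y Z : finType) (pUX : U -> X -> R) (W : X -> Y -> Z -> R) :
  1 <= @Bc U X Y Z pUX W.
Proof.
rewrite /Bc; have : 0 <= rsum (fun u => rsum (fun x => rsum (fun z => Rabs (@Lf U X Y Z pUX W u x z)))).
  apply: rsum_ge0 => u; apply: rsum_ge0 => x; apply: rsum_ge0 => z; exact: Rabs_pos.
lra.
Qed.

Theorem lemma4 (U X Y Z : finType) (pUX : U -> X -> R) (W : X -> Y -> Z -> R)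
  (R0 Rm Rr : R) (pK : forall n : nat, 'I_(nbits n Rr) -> R) :
  (forall u x, 0 <= pUX u x) ->
  rsum (fun u => rsum (fun x => pUX u x)) = 1 ->
  (forall x y z, 0 <= W x y z) ->
  (forall x, rsum (fun y => rsum (fun z => W x y z)) = 1) ->
  0 < R0 -> 0 < Rm -> 0 < Rr ->
  (forall n : nat, is_dist (pK n)) ->
  (* liminf_n (1/n) R_2(K) > I(X;Z|U) *)
  (exists c : R, condMI pUX W < c /\
     exists n0 : nat, forall n : nat, (n0 <= n)%N -> c <= Renyi2 (pK n) / INR n) ->
  exists beta : R, 0 < beta /\
    exists n0 : nat, forall n : nat, (n0 <= n)%N ->
      expected_leak pUX W n (nbits n R0) (nbits n Rm) (nbits n Rr) (pK n)
        <= Rpower 2 (- (beta * INR n)).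
Proof.
move=> pUX0 pUX1 W0 W1 hR0 hRm hRr pKd [cc [hI [n0 hn0]]].
set I := condMI pUX W.
set B := @Bc U X Y Z pUX W.
have B1 : 1 <= B by exact: Bc_ge1.
have l2 : 0 < ln 2 by rewrite -ln_1; apply: ln_increasing; lra.
set d := (cc - I) / 2.
have d0 : 0 < d by rewrite /d /I; lra.
set lam := Rmin (1 / (2 * B)) (ln 2 * d / (4 * (B * B))).
have lam0 : 0 < lam.
  apply: Rmin_glb_lt; apply: Rdiv_lt_0_compat.
  - lra.
  - lra.
  - exact: Rmult_lt_0_compat.
  - apply: Rmult_lt_0_compat; [lra| apply: Rmult_lt_0_compat; lra].
have lamB : lam * B <= 1 / 2.
  have h := Rmin_l (1 / (2 * B)) (ln 2 * d / (4 * (B * B))).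
  have := Rmult_le_compat_r B _ _ (ltac:(lra) : 0 <= B) h.
  have -> : 1 / (2 * B) * B = 1 / 2 by field; lra.
  by [].
have lam1 : lam <= 1 / 2 by nra.
have lamq : 2 * (lam * lam) * (B * B) <= lam * ln 2 * d / 2.
  have h := Rmin_r (1 / (2 * B)) (ln 2 * d / (4 * (B * B))).
  have hB : 0 < 4 * (B * B) by nra.
  have h2 : lam * (4 * (B * B)) <= ln 2 * d.
    have := Rmult_le_compat_r (4 * (B * B)) _ _ (Rlt_le _ _ hB) h.
    have -> : ln 2 * d / (4 * (B * B)) * (4 * (B * B)) = ln 2 * d by field; lra.
    by [].
  have := Rmult_le_compat_l (lam / 2) _ _ (ltac:(lra) : 0 <= lam / 2) h2.
  have -> : lam / 2 * (lam * (4 * (B * B))) = 2 * (lam * lam) * (B * B) by field.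
  have -> : lam / 2 * (ln 2 * d) = lam * ln 2 * d / 2 by field.
  by [].
set r := lam * d * ln 2 / 2.
have r0 : 0 < r by rewrite /r; have := Rmult_lt_0_compat _ _ lam0 d0; nra.
set beta := r / (2 * ln 2).
have beta0 : 0 < beta by apply: Rdiv_lt_0_compat; lra.
have [n1 hn1] := INR_archimed (r / 2) 5 (ltac:(lra)).
exists beta; split => //.
exists (maxn (maxn n0 n1) 1) => n hn.
have hn0' : (n0 <= n)%N by apply: leq_trans hn; rewrite (leq_trans (leq_maxl n0 n1)) // leq_maxl.
have hn1' : (n1 <= n)%N by apply: leq_trans hn; rewrite (leq_trans (leq_maxr n0 n1)) // leq_maxl.
have npos : (1 <= n)%N by apply: leq_trans hn; rewrite leq_maxr.
have nR : 0 < INR n by apply: lt_0_INR; apply/ltP.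
have n1R : INR n1 <= INR n by apply: le_INR; apply/leP.
pose gam := INR n * (cc - d).
have hmb := @main_bound U X Y Z pUX W pUX0 pUX1 W0 W1 n _ _ _ (pK n) gam lam
   (nbits_pos n R0 hR0) (nbits_pos n Rm hRm) (pKd n).1 (pKd n).2 lam0 lamB.
apply: Rle_trans hmb _.
rewrite -/I -/B.
set S := rsum (fun k => pK n k * pK n k).
have S0 : 0 <= S by apply: rsum_ge0 => k; exact: Rle_0_sqr.
have hS : S <= exp (- (cc * INR n) * ln 2).
  have hr := hn0 n hn0'.
  have h1 : cc * INR n <= Renyi2 (pK n).
    have := Rmult_le_compat_r (INR n) _ _ (Rlt_le _ _ nR) hr.
    have -> : Renyi2 (pK n) / INR n * INR n = Renyi2 (pK n) by field; lra.
    by [].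
  have eR : Renyi2 (pK n) = - (ln S / ln 2) by [].
  case: (Rle_lt_or_eq_dec _ _ S0) => Sp; last by rewrite -Sp; left; exact: exp_pos.
  rewrite -(exp_ln S Sp); apply: exp_le.
  have h2 : ln S / ln 2 <= - (cc * INR n) by lra.
  have := Rmult_le_compat_r (ln 2) _ _ (Rlt_le _ _ l2) h2.
  have -> : ln S / ln 2 * ln 2 = ln S by field; lra.
  by [].
have T1 : sqrt (S * Rpower 2 gam) <= exp (- (INR n * r)).
  have h1 : S * Rpower 2 gam <= exp (- (INR n * d * ln 2) / 2) * exp (- (INR n * d * ln 2) / 2).
    rewrite -exp_plus.
    have -> : - (INR n * d * ln 2) / 2 + - (INR n * d * ln 2) / 2 = - (cc * INR n) * ln 2 + gam * ln 2.
      rewrite /gam; field.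
    rewrite exp_plus; apply: Rmult_le_compat_r => //; left; exact: exp_pos.
  apply: Rle_trans (sqrt_le_1_alt _ _ h1) _.
  rewrite sqrt_square; last by left; exact: exp_pos.
  apply: exp_le.
  have : r <= d * ln 2 / 2 by rewrite /r; have := Rmult_le_compat_r (d * ln 2 / 2) lam 1 (ltac:(nra)) (ltac:(lra)); lra.
  move=> hr.
  have := Rmult_le_compat_l (INR n) _ _ (Rlt_le _ _ nR) hr.
  lra.
have T2 : exp (lam * ln 2 * I + 2 * (lam * lam) * (B * B)) ^ n * / Rpower (Rpower 2 gam) lam <=
     exp (- (INR n * r)).
  rewrite exp_pow Rpower_mult /Rpower -exp_Ropp -exp_plus; apply: exp_le.
  have e : cc - d = I + d by rewrite /d; field.
  have -> : INR n * (lam * ln 2 * I + 2 * (lam * lam) * (B * B)) + - (gam * lam * ln 2) =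
     INR n * (2 * (lam * lam) * (B * B) - lam * d * ln 2).
    rewrite /gam e; ring.
  have k : 2 * (lam * lam) * (B * B) - lam * d * ln 2 <= - r by rewrite /r; lra.
  have := Rmult_le_compat_l (INR n) _ _ (Rlt_le _ _ nR) k.
  lra.
have eb : Rpower 2 (- (beta * INR n)) = exp (- (INR n * r) / 2).
  rewrite /Rpower; congr exp; rewrite /beta; field; lra.
rewrite eb.
have E6 : 6 <= exp (INR n * r / 2).
  apply: Rle_trans (exp_ineq1_le _).
  have := Rmult_le_compat_r (r / 2) _ _ (ltac:(lra)) n1R.
  have -> : INR n * (r / 2) = INR n * r / 2 by field.
  lra.
have ee : exp (- (INR n * r) / 2) * exp (INR n * r / 2) = 1.
  by rewrite -exp_plus (_ : - (INR n * r) / 2 + INR n * r / 2 = 0) ?exp_0 //; field.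
have e2 : exp (- (INR n * r)) = exp (- (INR n * r) / 2) * exp (- (INR n * r) / 2).
  by rewrite -exp_plus; congr exp; field.
have ep := exp_pos (- (INR n * r) / 2).
have h6 : 6 * exp (- (INR n * r) / 2) <= 1.
  rewrite -ee Rmult_comm; apply: Rmult_le_compat_l; [lra| exact: E6].
have : 6 * exp (- (INR n * r)) <= exp (- (INR n * r) / 2).
  rewrite e2; have := Rmult_le_compat_r (exp (- (INR n * r) / 2)) _ _ (Rlt_le _ _ ep) h6.
  lra.
lra.
Qed.
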